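(* Let $P_k\ge 3$, let $w_k$ be an integer with $1<w_k<P_k$, let $\mu>0$, $\beta>0$, $s_k>0$, and let $\nu\in\mathbb{R}^{P_k}$ with $\nu_1\ge\nu_2\ge\dots\ge\nu_{P_k}$. Consider $$\min_{x\in\mathbb{R}^{P_k},\ x\ge 0,\ \|x\|_0\le w_k}\ \ -U_k\Big(\sum_{i=1}^{P_k}x_i\Big)+\frac{\mu}{2}\|x-\nu\|_2^2 .$$ Then there is a minimizer $x^\star$ of this problem satisfying $$x^\star_i=\max(0,\nu_i+\zeta)\ \ (i=1,\dots,w_k),\qquad x^\star_i=0\ \ (i>w_k),$$ where $\zeta>0$ satisfies $\sum_{i=1}^{w_k}\max(0,\nu_i+\zeta)>0$ and $\mu\zeta=U_k'\big(\sum_{i=1}^{w_k}\max(0,\nu_i+\zeta)\big)$. Moreover, with the convention $U_k'(0)=+\infty$: if there is a smallest index $i'\in\{2,\dots,w_k\}$ such that $\zeta_0:=-\nu_{i'}>0$ and $\mu\zeta_0\ge U_k'\big(\sum_{i=1}^{w_k}\max(0,\nu_i+\zeta_0)\big)$, then $\zeta$ is the largest real root of $$\mu\zeta\Big(\sum_{i=1}^{i'-1}(\nu_i+\zeta)\Big)^2=\beta\sum_{i=1}^{i'-1}(\nu_i+\zeta)+s_k ;$$ otherwise $\zeta$ is the largest real root of $$\mu\zeta\Big(\sum_{i=1}^{w_k}(\nu_i+\zeta)\Big)^2=\beta\sum_{i=1}^{w_k}(\nu_i+\zeta)+s_k .$$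
   Context: $U_k(u)=\beta\log u-\frac{s_k}{u}$ for $u>0$ (so $U_k'(u)=\frac{\beta}{u}+\frac{s_k}{u^2}$), and $-U_k(0)$ is taken to be $+\infty$, so that the objective equals $+\infty$ at $x=0$. $\|x\|_0$ denotes the number of nonzero entries of $x$. *)

(* Defs.v *)
From HB Require Import structures.
From mathcomp Require Import all_boot all_order all_algebra.
From mathcomp Require Import all_classical all_reals all_analysis.
Set Implicit Arguments. Unset Strict Implicit. Unset Printing Implicit Defensive.
Import Order.TTheory GRing.Theory Num.Theory.
Local Open Scope ring_scope.

Section Defs.
Variable R : realType.

Definition Uk (beta s u : R) : R := beta * ln u - s / u.

Definition dUk (beta s u : R) : R := beta / u + s / u ^+ 2.

(* Objective -U_k(sum x) + mu/2 ||x - nu||^2, with value +oo when sum x <= 0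
   (on the feasible set x >= 0 this happens exactly at x = 0, where -U_k(0)=+oo). *)
Definition objective (P : nat) (beta s mu : R) (nu x : 'I_P -> R) : \bar R :=
  let S := \sum_(i < P) x i in
  if 0 < S then
    (- Uk beta s S + mu / 2 * \sum_(i < P) (x i - nu i) ^+ 2)%:E
  else +oo%E.

Definition feasible (P w : nat) (x : 'I_P -> R) : Prop :=
  (forall i, 0 <= x i) /\ (#|[set i | x i != 0%R]| <= w)%N.

Definition is_minimizer (P w : nat) (beta s mu : R) (nu x : 'I_P -> R) : Prop :=
  feasible w x /\
  forall y : 'I_P -> R, feasible w y ->
    (objective beta s mu nu x <= objective beta s mu nu y)%E.

(* sum_{i=1}^{w} max(0, nu_i + z)  (0-based: indices i < w) *)
Definition Ssum (P w : nat) (nu : 'I_P -> R) (z : R) : R :=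
  \sum_(i < P | (i < w)%N) Num.max 0 (nu i + z).

Definition cubic_eq (P m : nat) (mu beta s : R) (nu : 'I_P -> R) (z : R) : Prop :=
  let T := \sum_(i < P | (i < m)%N) (nu i + z) in
  mu * z * T ^+ 2 = beta * T + s.

Definition largest_root (p : R -> Prop) (z : R) : Prop :=
  p z /\ forall y, p y -> y <= z.

(* condition on (0-based) index j, i.e. paper index i' = j+1:
   zeta0 := -nu_j > 0 and mu zeta0 >= U'(S(zeta0)) with U'(0) = +oo
   (so the condition requires S(zeta0) > 0). *)
Definition idx_cond (P w : nat) (mu beta s : R) (nu : 'I_P -> R) (j : 'I_P) : Prop :=
  let z0 := - nu j in
  0 < z0 /\ 0 < Ssum w nu z0 /\ dUk beta s (Ssum w nu z0) <= mu * z0.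

End Defs.

(* Main.v *)
Require Import Defs.
From HB Require Import structures.
From mathcomp Require Import all_boot all_order all_algebra.
From mathcomp Require Import all_classical all_reals all_analysis.
From mathcomp Require Import lra ring zify.
Import Order.TTheory GRing.Theory Num.Theory.
Import numFieldNormedType.Exports.
Local Open Scope ring_scope.

Lemma cont_sum (R : realType) (P : nat) (F : 'I_P -> R -> R) (p : pred 'I_P) :
  (forall i, continuous (F i : R -> R)) -> continuous ((fun z => \sum_(i < P | p i) F i z) : R -> R).
Proof.
move=> cF.
suff H : forall r : seq 'I_P, continuous (fun z => \sum_(i <- r | p i) F i z).
  exact: H.
elim=> [|i r IH].
  under eq_fun do rewrite big_nil. exact: cst_continuous.
under eq_fun do rewrite big_cons.
case: (p i).
  move=> x; apply: cvgD; [exact: cF | exact: IH].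
exact: IH.
Qed.

Lemma cont_dUk (R : realType) (beta s d : R) (m : R -> R) : 0 < d ->
  continuous (m : R -> R) -> (forall z, d <= m z) -> continuous ((fun z => dUk beta s (m z)) : R -> R).
Proof.
move=> d0 cm md x.
have mx0 : m x != 0 by rewrite gt_eqF // (lt_le_trans d0).
rewrite /dUk.
apply: cvgD; apply: cvgM; try exact: cvg_cst.
  apply: cvgV => //; exact: cm.
apply: cvgV; first by rewrite expf_neq0.
under eq_fun do rewrite expr2.
rewrite expr2. apply: cvgM; exact: cm.
Qed.

Lemma maxmono (R : realType) (a b : R) : a <= b -> Num.max 0 a <= Num.max 0 b.
Proof. by move=> ab; rewrite ge_max !le_max lexx ab !orbT. Qed.

Lemma S_ge (R : realType) (P w : nat) (nu : 'I_P -> R) (i0 : 'I_P) z :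
  (i0 < w)%N -> nu i0 + z <= Ssum w nu z.
Proof.
move=> hi0; rewrite /Ssum (bigD1 i0) //=.
apply: (le_trans (y := Num.max 0 (nu i0 + z))); first by rewrite le_max lexx orbT.
rewrite lerDl; apply: sumr_ge0 => i _; by rewrite le_max lexx.
Qed.

Lemma S_ge0 (R : realType) (P w : nat) (nu : 'I_P -> R) z : 0 <= Ssum w nu z.
Proof. by apply: sumr_ge0 => i _; rewrite le_max lexx. Qed.

Lemma S_mono (R : realType) (P w : nat) (nu : 'I_P -> R) z1 z2 :
  z1 <= z2 -> Ssum w nu z1 <= Ssum w nu z2.
Proof. by move=> h; apply: ler_sum => i _; apply: maxmono; rewrite lerD2l. Qed.

Lemma S_le (R : realType) (P w : nat) (nu : 'I_P -> R) (i0 : 'I_P) z :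
  (forall i, nu i <= nu i0) -> Ssum w nu z <= P%:R * Num.max 0 (nu i0 + z).
Proof.
move=> hmax; rewrite /Ssum big_mkcond /=.
apply: (le_trans (y := \sum_(i < P) Num.max 0 (nu i0 + z))).
  apply: ler_sum => i _; case: ifP => _.
    by apply: maxmono; rewrite lerD2r.
  by rewrite le_max lexx.
by rewrite sumr_const card_ord mulr_natl.
Qed.

Lemma exists_zeta (R : realType) (P w : nat) (mu beta s : R) (nu : 'I_P -> R) (i0 : 'I_P) :
  (i0 < w)%N -> (forall i, nu i <= nu i0) -> 0 < mu -> 0 < beta -> 0 < s ->
  exists z, 0 < Ssum w nu z /\ mu * z = dUk beta s (Ssum w nu z).
Proof.
move=> hi0 hmax mu0 be0 s0.
set c := nu i0.
have hc1 : c <= `|c| := ler_norm c.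
have hc2 : - c <= `|c| by rewrite -normrN ler_norm.
have P0 : (0 < P)%N by case: (i0) => i /=; case: P {nu hmax c hc1 hc2 i0 hi0}.
have P0r : 0 < P%:R :> R by rewrite ltr0n.
set K := P%:R * mu * (`|c| + 1).
have K0 : 0 < K by rewrite !mulr_gt0 // ltr_wpDl.
set d := beta / (K + beta).
have d0 : 0 < d by rewrite divr_gt0 // addr_gt0.
have ed : d * (K + beta) = beta by rewrite /d divfK // gt_eqF // addr_gt0.
have d1 : d < 1 by nra.
have Kd : K * d < beta by nra.
set a := - c + d.
set b := `|c| + 1 + (beta + s) / mu.
have ab : a <= b.
  have : 0 <= (beta + s) / mu by rewrite divr_ge0 // ltW // addr_gt0.
  rewrite /a /b; lra.
set m := fun z => Num.max d (Ssum w nu z).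
set h := fun z => mu * z - dUk beta s (m z).
have cS : continuous (fun z => Ssum w nu z).
  apply: (@cont_sum R P (fun i z => Num.max 0 (nu i + z)) (fun i : 'I_P => (i < w)%N)) => i x.
  apply: continuous_max; first exact: cvg_cst.
  apply: cvgD; [exact: cvg_cst | exact: cvg_id].
have cm : continuous m.
  move=> x; exact: (@continuous_max R R (fun=> d) (fun z => Ssum w nu z) x (cvg_cst _) (cS x)).
have ch : continuous h.
  move=> x; apply: cvgB.
    apply: cvgM; [exact: cvg_cst | exact: cvg_id].
  have md : forall z, d <= m z by move=> z; rewrite /m le_max lexx.
  exact: (@cont_dUk R beta s d m d0 cm md x).
have Sa : d <= Ssum w nu a by apply: le_trans (S_ge _ _ w nu i0 a hi0); rewrite /a /c; lra.
have Sa' : Ssum w nu a <= P%:R * d.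
  apply: le_trans (S_le _ _ w nu i0 a hmax) _; rewrite /a -/c.
  have -> : c + (-c + d) = d by lra.
  by rewrite (max_idPr (ltW d0)).
have ha : h a <= 0.
  rewrite /h /m (max_idPr Sa) subr_le0.
  set S := Ssum w nu a in Sa Sa' *.
  have S0 : 0 < S by apply: lt_le_trans Sa.
  apply: (le_trans (y := beta / S)); last first.
    by rewrite /dUk lerDl divr_ge0 // ?ltW // exprn_gt0.
  rewrite ler_pdivlMr //.
  have h1 : mu * a <= mu * (`|c| + 1) by rewrite ler_pM2l // /a; lra.
  have : mu * (`|c| + 1) * S <= mu * (`|c| + 1) * (P%:R * d).
    by rewrite ler_pM2l // mulr_gt0 // ltr_wpDl.
  have : mu * a * S <= mu * (`|c| + 1) * S by rewrite ler_pM2r.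
  rewrite /K in Kd. nra.
have Sb : 1 <= Ssum w nu b.
  apply: le_trans (S_ge _ _ w nu i0 b hi0).
  have : 0 <= (beta + s) / mu by rewrite divr_ge0 // ltW // addr_gt0.
  rewrite /b -/c; lra.
have hb : 0 <= h b.
  have db : d <= Ssum w nu b by apply: le_trans Sb; apply: ltW.
  rewrite /h /m (max_idPr db) subr_ge0.
  set S := Ssum w nu b in Sb db *.
  have S0 : 0 < S by apply: lt_le_trans Sb.
  have e1 : beta / S <= beta by rewrite ler_pdivrMr // ler_peMr // ltW.
  have e2 : s / S ^+ 2 <= s.
    rewrite ler_pdivrMr ?exprn_gt0 // ler_peMr //; [exact: (ltW s0) | exact: exprn_ege1].
  have e3 : mu * b = mu * (`|c| + 1) + (beta + s).
    by rewrite /b mulrDr mulrCA divff ?mulr1 // gt_eqF.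
  have : 0 <= mu * (`|c| + 1) by rewrite mulr_ge0 // ?ltW // ltr_wpDl.
  rewrite /dUk; lra.
have [z zab hz] : exists2 z, z \in `[a, b] & h z = 0.
  apply: IVT => //; first exact: continuous_subspaceT.
  by rewrite ge_min ha le_max hb orbT.
have Sz : d <= Ssum w nu z.
  apply: le_trans (S_ge _ _ w nu i0 z hi0).
  move: zab; rewrite in_itv /= => /andP[az _]; rewrite /a /c in az *; lra.
exists z; split; first exact: lt_le_trans Sz.
by move: hz; rewrite /h /m (max_idPr Sz) => /eqP; rewrite subr_eq0 => /eqP.
Qed.

Lemma card_lt (P w : nat) (L : {set 'I_P}) : (w <= P)%N ->
  (forall i, (i \in L) = (i < w)%N) -> #|L| = w.
Proof.
move=> wP hL; rewrite -sum1_card.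
rewrite (eq_bigl (fun i : 'I_P => (i < w)%N)); last by move=> i; rewrite hL.
by rewrite -(big_ord_widen _ (fun _ => 1%N)) // sum1_card card_ord.
Qed.

Lemma topw (R : realType) (P w : nat) (m : 'I_P -> R) (A : {set 'I_P}) :
  (w < P)%N -> (forall i, 0 <= m i) -> (forall i j : 'I_P, (i <= j)%N -> m j <= m i) ->
  (#|A| <= w)%N -> \sum_(i in A) m i <= \sum_(i < P | (i < w)%N) m i.
Proof.
move=> wP m0 mono cA.
set L := [set i : 'I_P | (i < w)%N].
have -> : \sum_(i < P | (i < w)%N) m i = \sum_(i in L) m i.
  by apply: eq_bigl => i; rewrite inE.
rewrite (big_setID L) [X in _ <= X](big_setID A) /= finset.setIC lerD2l.
set t := m (Ordinal wP).
have h1 : \sum_(i in A :\: L) m i <= \sum_(i in A :\: L) t.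
  apply: ler_sum => i; rewrite !inE -leqNgt => /andP[hi _]; exact: mono.
have h2 : \sum_(i in L :\: A) t <= \sum_(i in L :\: A) m i.
  apply: ler_sum => i; rewrite !inE => /andP[_ hi]; apply: mono => /=; exact: ltnW.
rewrite !sumr_const in h1 h2.
have hc : (#|A :\: L| <= #|L :\: A|)%N.
  have e1 := cardsID L A; have e2 := cardsID A L.
  rewrite finset.setIC in e2. have eL : #|L| = w by apply: card_lt (ltnW wP) _ => i; rewrite inE.
  rewrite -(leq_add2l #|A :&: L|) e1 e2 eL; exact: cA.
have h3 : t *+ #|A :\: L| <= t *+ #|L :\: A|.
  rewrite -mulr_natr -[t *+ #|L :\: A|]mulr_natr.
  by rewrite ler_wpM2l ?ler_nat //; exact: m0.
exact: le_trans h1 (le_trans h3 h2).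
Qed.

Lemma dUk_anti (R : realType) (b s u1 u2 : R) : 0 <= b -> 0 <= s -> 0 < u1 -> u1 <= u2 ->
  dUk b s u2 <= dUk b s u1.
Proof.
move=> b0 s0 u10 u12; have u20 : 0 < u2 := lt_le_trans u10 u12.
rewrite /dUk; apply: lerD; apply: ler_wpM2l => //.
  by rewrite lef_pV2 ?posrE.
rewrite lef_pV2 ?posrE ?exprn_gt0 //.
by rewrite ler_pXn2r // ?nnegrE ltW.
Qed.

Lemma dUk_pos (R : realType) (b s u : R) : 0 < b -> 0 < s -> 0 < u -> 0 < dUk b s u.
Proof. by move=> *; rewrite /dUk addr_gt0 // divr_gt0 // exprn_gt0. Qed.

Lemma root_lemma (R : realType) (P m : nat) (mu beta s : R) (nu : 'I_P -> R) (z : R) :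
  0 < mu -> 0 < beta -> 0 < s ->
  0 < \sum_(i < P | (i < m)%N) (nu i + z) ->
  mu * z = dUk beta s (\sum_(i < P | (i < m)%N) (nu i + z)) ->
  largest_root (cubic_eq m mu beta s nu) z.
Proof.
move=> mu0 be0 s0; set T := \sum_(i < P | _) _ => T0 hz.
have key : forall u, 0 < u -> dUk beta s u * u ^+ 2 = beta * u + s.
  by move=> u u0; rewrite /dUk; field; rewrite gt_eqF.
split; first by rewrite /cubic_eq /= -/T hz key.
move=> y; rewrite /cubic_eq /=; set Ty := \sum_(i < P | _) _ => hy.
rewrite leNgt; apply/negP => zy.
have Tyz : T <= Ty by apply: ler_sum => i _; rewrite lerD2l ltW.
have Ty0 : 0 < Ty := lt_le_trans T0 Tyz.
have h1 : dUk beta s Ty < mu * y.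
  apply: le_lt_trans (dUk_anti _ _ _ _ _ (ltW be0) (ltW s0) T0 Tyz) _.
  by rewrite -hz ltr_pM2l.
have : dUk beta s Ty * Ty ^+ 2 < mu * y * Ty ^+ 2 by rewrite ltr_pM2r // exprn_gt0.
by rewrite key // hy ltxx.
Qed.

Lemma conv_Uk (R : realType) (b s u v : R) : 0 <= b -> 0 <= s -> 0 < u -> 0 < v ->
  Uk b s v <= Uk b s u + dUk b s u * (v - u).
Proof.
move=> b0 s0 u0 v0.
have f1 : ln v - ln u <= v / u - 1.
  have hp : v / u \is Num.pos by rewrite posrE divr_gt0.
  rewrite -ln_div ?posrE //.
  have := expR_ge1Dx (ln (v / u)); rewrite lnK //; lra.
have f1' : b * (ln v - ln u) <= b * (v / u - 1) by rewrite ler_wpM2l.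
have f2 : b * (v / u - 1) = b / u * (v - u) by field; rewrite gt_eqF.
have f3 : s / u - s / v - s / u ^+ 2 * (v - u) = - (s * (v - u) ^+ 2 / (u ^+ 2 * v)).
  by field; rewrite !gt_eqF.
have f4 : 0 <= s * (v - u) ^+ 2 / (u ^+ 2 * v).
  apply: divr_ge0; first by rewrite mulr_ge0 ?sqr_ge0 // ltW.
  by rewrite ltW // mulr_gt0 // exprn_gt0.
rewrite /Uk /dUk. lra.
Qed.

Lemma shift_sum (R : realType) (P : nat) (v nu : 'I_P -> R) (z : R) :
  \sum_(i < P) (v i - nu i) ^+ 2 - 2 * z * \sum_(i < P) v i =
  \sum_(i < P) (v i - (nu i + z)) ^+ 2 - \sum_(i < P) (2 * nu i * z + z ^+ 2).
Proof.
rewrite mulr_sumr -!sumrB; apply: eq_bigr => i _; ring.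
Qed.

Theorem lemma3 (R : realType) (P w : nat) (mu beta s : R) (nu : 'I_P -> R) :
  (3 <= P)%N -> (1 < w)%N -> (w < P)%N ->
  0 < mu -> 0 < beta -> 0 < s ->
  (forall i j : 'I_P, (i <= j)%N -> nu j <= nu i) ->
  exists (x : 'I_P -> R) (zeta : R),
    is_minimizer w beta s mu nu x /\
    (forall i : 'I_P, x i = if (i < w)%N then Num.max 0 (nu i + zeta) else 0) /\
    0 < zeta /\ 0 < Ssum w nu zeta /\
    mu * zeta = dUk beta s (Ssum w nu zeta) /\
    (forall j : 'I_P, (1 <= j < w)%N -> idx_cond w mu beta s nu j ->
       (forall k : 'I_P, (1 <= k < j)%N -> ~ idx_cond w mu beta s nu k) ->
       largest_root (cubic_eq j mu beta s nu) zeta) /\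
    ((forall j : 'I_P, (1 <= j < w)%N -> ~ idx_cond w mu beta s nu j) ->
       largest_root (cubic_eq w mu beta s nu) zeta).
Proof.
move=> P3 w1 wP mu0 be0 s0 hnu.
have P0 : (0 < P)%N by apply: leq_trans P3.
pose i0 : 'I_P := Ordinal P0.
have w0 : (i0 < w)%N by apply: ltnW.
have hmax : forall i, nu i <= nu i0 by move=> i; apply: hnu.
have [z [Sz hz]] := exists_zeta R P w mu beta s nu i0 w0 hmax mu0 be0 s0.
have z0 : 0 < z.
  rewrite ltNge; apply/negP => hz0.
  have := dUk_pos _ _ _ _ be0 s0 Sz; rewrite -hz.
  have : mu * z <= 0 by rewrite mulr_ge0_le0 // ltW.
  lra.
have hB : 0 < nu i0 + z.
  rewrite ltNge; apply/negP => h.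
  suff : Ssum w nu z = 0 by move=> e; move: Sz; rewrite e ltxx.
  rewrite /Ssum big1 // => i _; apply/max_idPl.
  by apply: le_trans h; rewrite lerD2r.
have hA : forall i : 'I_P, (1 <= i < w)%N -> nu i + z <= 0 -> idx_cond w mu beta s nu i.
  move=> i /andP[i1 iw] h; rewrite /idx_cond /=.
  have hz1 : z <= - nu i by lra.
  have S1 := S_mono R P w nu _ _ hz1.
  have S2 : 0 < Ssum w nu (- nu i) := lt_le_trans Sz S1.
  split; first lra.
  split => //.
  apply: le_trans (dUk_anti _ _ _ _ _ (ltW be0) (ltW s0) Sz S1) _.
  by rewrite -hz ler_pM2l.
have Seq : forall m : nat, (m <= w)%N -> (forall i : 'I_P, (i < m)%N -> 0 < nu i + z) ->
    (forall i : 'I_P, (m <= i)%N -> (i < w)%N -> nu i + z <= 0) ->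
    Ssum w nu z = \sum_(i < P | (i < m)%N) (nu i + z).
  move=> m mw hpos hneg; rewrite /Ssum big_mkcond [RHS]big_mkcond; apply: eq_bigr => i _.
  case: (ltnP i m) => him.
    rewrite (leq_trans him mw); apply/max_idPr; exact: ltW (hpos i him).
  by case: ifP => // hiw; apply/max_idPl; apply: hneg.
have hpos0 : forall i : 'I_P, (i < 1)%N -> 0 < nu i + z.
  move=> i; rewrite ltnS leqn0 => /eqP i0'.
  apply: lt_le_trans hB _; rewrite lerD2r; apply: hnu; by rewrite i0'.
pose x := fun i : 'I_P => if (i < w)%N then Num.max 0 (nu i + z) else 0.
have hx : forall i, x i = if (i < w)%N then Num.max 0 (nu i + z) else 0 by [].
clearbody x.
exists x, z.
split; last first.
  split => //; split => //; split => //; split => //; split.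
  - move=> j /andP[j1 jw] hj hk.
    case: hj => /= hj0 [hj1 hj2].
    have zj : z <= - nu j.
      rewrite leNgt; apply/negP => zlt.
      have S1 : Ssum w nu (- nu j) <= Ssum w nu z by apply: S_mono; apply: ltW.
      have := dUk_anti _ _ _ _ _ (ltW be0) (ltW s0) hj1 S1.
      rewrite -hz; have : mu * (- nu j) < mu * z by rewrite ltr_pM2l.
      lra.
    have e : Ssum w nu z = \sum_(i < P | (i < j)%N) (nu i + z).
      apply: Seq; first exact: ltnW.
        move=> i hi; case: (ltnP i 1) => i1; first exact: hpos0.
        rewrite ltNge; apply/negP => hle; apply: (hk i); first by rewrite i1.
        apply: hA => //; rewrite i1 /=; exact: ltn_trans hi jw.
      move=> i ji iw; have := hnu _ _ ji; lra.
    by apply: root_lemma => //; rewrite -e.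
  - move=> hk.
    have hp : forall i : 'I_P, (i < w)%N -> 0 < nu i + z.
      move=> i hi; case: (ltnP i 1) => i1; first exact: hpos0.
      rewrite ltNge; apply/negP => hle; apply: (hk i); first by rewrite i1.
      by apply: hA => //; rewrite i1.
    have e : Ssum w nu z = \sum_(i < P | (i < w)%N) (nu i + z).
      by apply: Seq => // i a b; move: a; rewrite leqNgt b.
    by apply: root_lemma => //; rewrite -e.
split.
  split.
    by move=> i; rewrite hx; case: ifP => _ //; rewrite le_max lexx.
  apply: leq_trans (subset_leq_card (B := [set i : 'I_P | (i < w)%N]) _) _.
    by apply/fintype.subsetP => i; rewrite !inE hx; case: ifP => //; rewrite eqxx.
  by rewrite (card_lt P w _ (ltnW wP)) // => i; rewrite inE.
move=> y [y0 ycard].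
have Sx : \sum_(i < P) x i = Ssum w nu z.
  by rewrite /Ssum [RHS]big_mkcond; apply: eq_bigr => i _; rewrite hx.
rewrite /objective /= Sx Sz.
case: ifP => hSy; last by rewrite leey.
rewrite lee_fin.
set mm := fun i => Num.max 0 (nu i + z) ^+ 2.
have mm0 : forall i, 0 <= mm i by move=> i; exact: sqr_ge0.
have mmono : forall i j : 'I_P, (i <= j)%N -> mm j <= mm i.
  move=> i j hij; have h0 : nu j + z <= nu i + z by rewrite lerD2r; exact: hnu.
  have h := maxmono R _ _ h0.
  rewrite /mm !expr2; apply: ler_pM => //; rewrite le_max lexx //.
have c2 : \sum_(i < P) (x i - nu i) ^+ 2 - 2 * z * \sum_(i < P) x i <=
          \sum_(i < P) (y i - nu i) ^+ 2 - 2 * z * \sum_(i < P) y i.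
  rewrite !shift_sum.
  have ex : \sum_(i < P) (x i - (nu i + z)) ^+ 2 + \sum_(i < P | (i < w)%N) mm i =
            \sum_(i < P) (nu i + z) ^+ 2.
    rewrite [X in _ + X]big_mkcond -big_split; apply: eq_bigr => i _ /=; rewrite hx /mm.
    case: ifP => _; last by rewrite sub0r sqrrN addr0.
    by case: (leP 0 (nu i + z)) => ha; ring.
  have ey : \sum_(i < P) (nu i + z) ^+ 2 <=
            \sum_(i < P) (y i - (nu i + z)) ^+ 2 + \sum_(i in [set i | y i != 0]) mm i.
    rewrite [X in _ + X]big_mkcond -big_split /=; apply: ler_sum => i _; rewrite inE /mm.
    case: eqP => [-> | yn]; first by rewrite sub0r sqrrN addr0.
    have yi := y0 i.
    case: (leP 0 (nu i + z)) => ha; first by rewrite lerDr sqr_ge0.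
    rewrite /=; have : 0 <= y i * (y i - 2 * (nu i + z)) by apply: mulr_ge0 => //; lra.
    nra.
  have et := topw R P w mm [set i | y i != 0] wP mm0 mmono ycard.
  lra.
rewrite Sx in c2.
have c1 := conv_Uk _ _ _ _ _ (ltW be0) (ltW s0) Sz hSy; rewrite -hz in c1.
have c3 := ler_wpM2l (ltW (divr_gt0 mu0 (ltr0Sn R 1))) c2.
lra.
Qed.
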